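(* Let $n\in\mathbb N$ with $n\ge 10$. Then $\mathrm{ex}(2n-7;T_n^3)=n^2-8n+22$.
   Context: All graphs are finite simple graphs. For a graph $L$, $\mathrm{ex}(p;L)$ denotes the maximum number of edges in a graph on $p$ vertices that contains no subgraph isomorphic to $L$. For $n\ge 6$, $T_n^3$ is the tree on vertex set $\{v_0,\ldots,v_{n-1}\}$ with edge set $\{v_0v_1,v_0v_2,\ldots,v_0v_{n-4},\ v_1v_{n-3},\ v_1v_{n-2},\ v_1v_{n-1}\}$. *)

(* Defs.v *)
From mathcomp Require Import all_boot.
Set Implicit Arguments. Unset Strict Implicit. Unset Printing Implicit Defensive.

Definition is_graph (V : finType) (E : {set {set V}}) : bool :=
  [forall e in E, #|e| == 2].

Definition contains_copy (W V : finType) (F : {set {set W}}) (E : {set {set V}}) : bool :=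
  [exists f : {ffun W -> V}, injectiveb f && [forall e in F, (f @: e) \in E]].

Definition ex (p : nat) (W : finType) (F : {set {set W}}) : nat :=
  \max_(E : {set {set 'I_p}} | is_graph E && ~~ contains_copy F E) #|E|.

(* The tree T_n^3 on vertices v_0,...,v_{n-1} (identified with 'I_n):
   edges v0 v_i (1 <= i <= n-4) and v1 v_j (n-3 <= j <= n-1). *)
Definition T3_adj (n : nat) (x y : 'I_n) : bool :=
  ((val x == 0) && (1 <= val y <= n - 4)) ||
  ((val x == 1) && (n - 3 <= val y <= n - 1)).

Definition T3 (n : nat) : {set {set 'I_n}} :=
  [set [set x; y] | x in 'I_n, y in 'I_n & T3_adj x y].

(* Main.v *)
Require Import Defs.
From mathcomp Require Import all_boot zify.
Set Implicit Arguments. Unset Strict Implicit. Unset Printing Implicit Defensive.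

Definition adj (V : finType) (E : {set {set V}}) (x y : V) : bool := [set x; y] \in E.
Definition nb (V : finType) (E : {set {set V}}) (x : V) : {set V} := [set y | adj E x y].
Definition dg (V : finType) (E : {set {set V}}) (x : V) : nat := #|nb E x|.

Lemma adj_sym (V : finType) (E : {set {set V}}) x y : adj E x y = adj E y x.
Proof. by rewrite /adj setUC. Qed.

Lemma adj_irr (V : finType) (E : {set {set V}}) x : is_graph E -> ~~ adj E x x.
Proof.
move=> /forall_inP hE; apply/negP => h.
by have := hE _ h; rewrite setUid cards1.
Qed.

Lemma in_nb (V : finType) (E : {set {set V}}) x y : (y \in nb E x) = adj E x y.
Proof. by rewrite inE. Qed.

Lemma sum_mem_card (T : finType) (A : {pred T}) : \sum_x (x \in A : nat) = #|A|.
Proof.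
rewrite -sum1_card [in RHS]big_mkcond; apply: eq_bigr => x _; by case: (x \in A).
Qed.

Lemma card_setI_sum (T : finType) (A B : {set T}) : #|A :&: B| = \sum_(x in B) (x \in A : nat).
Proof.
rewrite big_mkcond -sum_mem_card; apply: eq_bigr => x _.
by rewrite inE; case: (x \in A); case: (x \in B).
Qed.

Lemma handshake (V : finType) (E : {set {set V}}) :
  is_graph E -> \sum_x dg E x = 2 * #|E|.
Proof.
move=> hE.
have hE' := hE; move/forall_inP: hE' => hE2.
have step1 : \sum_x dg E x = \sum_x \sum_(e in E) (x \in e : nat).
  apply: eq_bigr => x _.
  rewrite /dg.
  have -> : \sum_(e in E) (x \in e : nat) = #|[set e in E | x \in e]|.
    rewrite big_mkcond -sum_mem_card; apply: eq_bigr => e _.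
    by rewrite inE; case: (e \in E); case: (x \in e).
  have -> : [set e in E | x \in e] = (fun y => [set x; y]) @: nb E x.
    apply/setP => e; rewrite inE; apply/andP/imsetP.
    - case=> eE xe.
      have /cards2P [a [b [ab eab]]] := hE2 _ eE.
      move: xe eE; rewrite eab !inE => /orP [] /eqP -> eE.
      + by exists b => //; rewrite in_nb /adj.
      + by exists a; rewrite ?in_nb /adj setUC.
    - case=> y; rewrite in_nb => hy ->; split => //.
      by rewrite !inE eqxx.
  rewrite card_in_imset //.
  move=> y z; rewrite !in_nb => hy hz eq.
  have : y \in [set x; z] by rewrite -eq !inE eqxx orbT.
  rewrite !inE => /orP [] /eqP yx //.
  by move: hy; rewrite yx (negbTE (adj_irr x hE)).
rewrite step1 exchange_big /=.
rewrite (eq_bigr (fun _ => 2)); last first.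
  move=> e eE; rewrite sum_mem_card; exact/eqP/hE2.
by rewrite sum_nat_const mulnC.
Qed.


Lemma subset_card (T : finType) (A : {set T}) m :
  m <= #|A| -> exists B : {set T}, B \subset A /\ #|B| = m.
Proof.
move=> hm; exists [set x in take m (enum A)]; split.
  by apply/subsetP => x; rewrite inE => /mem_take; rewrite mem_enum.
rewrite cardsE (card_uniqP _).
  by rewrite size_takel // -cardE.
by rewrite take_uniq // enum_uniq.
Qed.

Lemma setD_aux (T : finType) (X Y D : {set T}) : X :\: ((Y :\: X) :|: D) = X :\: D.
Proof.
by apply/setP => x; rewrite !inE; case: (x \in X); rewrite ?andbF ?andbT.
Qed.

Lemma tfree_cond (n : nat) (V : finType) (E : {set {set V}}) :
  6 <= n -> is_graph E -> ~~ contains_copy (T3 n) E ->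
  forall u w, adj E u w -> n - 4 <= dg E u -> 4 <= dg E w ->
  #|(nb E u :|: nb E w) :\: [set u; w]| <= n - 3.
Proof.
move=> hn hE hT u w huw hu hw.
rewrite leqNgt; apply/negP => hbig.
move/negP: hT; apply.
set A := nb E u :\ w.
set B := nb E w :\ u.
have uu : u \notin nb E u by rewrite in_nb adj_irr.
have ww : w \notin nb E w by rewrite in_nb adj_irr.
have wu : w \in nb E u by rewrite in_nb.
have uw : u \in nb E w by rewrite in_nb adj_sym.
have cA : #|A| = dg E u - 1 by rewrite /A /dg (cardsD1 w (nb E u)) wu /=; lia.
have cB : #|B| = dg E w - 1 by rewrite /B /dg (cardsD1 u (nb E w)) uw /=; lia.
have AB : A :|: B = (nb E u :|: nb E w) :\: [set u; w].
  apply/setP => x; rewrite !inE.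
  case: (eqVneq x u) => [->|xu]; first by rewrite (negbTE (adj_irr u hE)) /= andbF.
  case: (eqVneq x w) => [->|xw]; first by rewrite (negbTE (adj_irr w hE)) /= ?andbF ?orbF ?andbT; case: (u == w).
  by [].
have cAB : n - 2 <= #|A :|: B| by rewrite AB; lia.
have [B' [sB' [cB' cAB']]] : exists B' : {set V}, [/\ B' \subset B, #|B'| = 3 & n - 5 <= #|A :\: B'|].
  case: (leqP 3 #|B :\: A|) => hC.
    have [B' [sB' cB']] := subset_card hC.
    exists B'; split => //.
      by apply: (subset_trans sB'); apply: subsetDl.
    have -> : A :\: B' = A.
      apply/setP => x; rewrite in_setD; case xB: (x \in B') => //=.
      by move/subsetP: sB' => /(_ x xB); rewrite in_setD => /andP [/negbTE ->].
    lia.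
  have hD : 3 - #|B :\: A| <= #|B :&: A|.
    have := cardsID A B; lia.
  have [D' [sD' cD']] := subset_card hD.
  exists ((B :\: A) :|: D'); split.
  - rewrite subUset subsetDl /=; apply: (subset_trans sD'); apply: subsetIl.
  - rewrite cardsU.
    have -> : (B :\: A) :&: D' = set0.
      apply/setP => x; rewrite in_setI in_set0; case xD: (x \in D'); rewrite ?andbF //= andbT in_setD.
      by move/subsetP: sD' => /(_ x xD); rewrite in_setI => /andP [_ ->].
    rewrite cards0; lia.
  - have -> : A :\: ((B :\: A) :|: D') = A :\: D'.
      by apply: setD_aux.
    rewrite cardsDS; last by apply: (subset_trans sD'); apply: subsetIr.
    have := cardsU A B; have := cardsID A B; have := cardsI A B.
    have -> : #|A :&: B| = #|B :&: A| by rewrite setIC.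
    lia.
have [A' [sA' cA']] := subset_card cAB'.
set s := u :: w :: enum A' ++ enum B'.
have ss : size s = n by rewrite /= size_cat -!cardE cA' cB'; lia.
have sA'A : A' \subset A by apply: (subset_trans sA'); apply: subsetDl.
have inA x : x \in enum A' -> adj E u x /\ x != u /\ x != w /\ x \notin B'.
  rewrite mem_enum => xA.
  move/subsetP: sA' => /(_ x xA); rewrite !inE => /andP [xB' /andP [xw xu]].
  repeat split => //.
  by apply/negP => /eqP xu'; move: xu; rewrite xu' (negbTE (adj_irr u hE)).
have inB x : x \in enum B' -> adj E w x /\ x != u /\ x != w.
  rewrite mem_enum => xB.
  move/subsetP: sB' => /(_ x xB); rewrite !inE => /andP [xu xw].
  repeat split => //.
  by apply/negP => /eqP xw'; move: xw; rewrite xw' (negbTE (adj_irr w hE)).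
have uw' : u != w by apply/negP => /eqP e; move: huw; rewrite e (negbTE (adj_irr w hE)).
have us : uniq s.
  rewrite /s cons_uniq in_cons mem_cat cons_uniq mem_cat cat_uniq !enum_uniq andbT.
  rewrite !negb_or uw' /=.
  apply/and3P; split; [apply/andP; split|apply/andP; split|].
  - by apply/negP => /inA [_ [h _]]; rewrite eqxx in h.
  - by apply/negP => /inB [_ [h _]]; rewrite eqxx in h.
  - by apply/negP => /inA [_ [_ [h _]]]; rewrite eqxx in h.
  - by apply/negP => /inB [_ [_ h]]; rewrite eqxx in h.
  - apply/hasPn => x xB; apply/negP => xA.
    have [_ [_ [_ h]]] := inA x xA.
    by move: xB; rewrite mem_enum (negbTE h).
apply/existsP; exists [ffun i : 'I_n => nth u s i]; apply/andP; split.
  apply/injectiveP => i j; rewrite !ffunE => /eqP; rewrite nth_uniq ?ss //.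
  by move=> /eqP ij; apply: val_inj.
apply/forall_inP => e /imset2P [x y _]; rewrite inE => hxy ->.
rewrite imsetU1 imset_set1 !ffunE.
change (adj E (nth u s x) (nth u s y)).
have hy := ltn_ord y.
move: hxy; rewrite /T3_adj => /orP [/andP [/eqP x0 /andP [y1 y2]] | /andP [/eqP x1 /andP [y1 y2]]].
- change (nat_of_ord x = 0) in x0; rewrite x0 /=.
  move: y1 y2 hy; change (val y) with (nat_of_ord y); case: (nat_of_ord y) => [|[|y']] //= y1 y2 hy.
  have hl : y' < size (enum A') by rewrite -cardE cA'; move: y2 hn; clear; lia.
  rewrite nth_cat hl.
  exact: (inA _ (mem_nth _ hl)).1.
- change (nat_of_ord x = 1) in x1; rewrite x1 /=.
  move: y1 y2 hy; change (val y) with (nat_of_ord y) => y1 y2 hy.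
  have y3 : 2 <= nat_of_ord y by move: y1 hn; clear; lia.
  move: y1 y2 hy y3; case: (nat_of_ord y) => [|[|y']] //= y1 y2 hy y3.
  have hl : ~~ (y' < size (enum A')) by rewrite -cardE cA'; move: y1 hn; clear; lia.
  rewrite nth_cat (negbTE hl).
  have hl2 : y' - size (enum A') < size (enum B') by rewrite -!cardE cA' cB'; move: y2 hn; clear; lia.
  exact: (inB _ (mem_nth _ hl2)).1.
Qed.


Definition TFk (V : finType) (E : {set {set V}}) (k : nat) :=
  forall a b, adj E a b -> k <= dg E a -> 4 <= dg E b ->
  #|(nb E a :|: nb E b) :\: [set a; b]| <= k + 1.

Definition Rset (V : finType) (E : {set {set V}}) (u : V) : {set V} :=
  [set x | (x != u) && ~~ adj E u x].

Lemma card_disj_le (T : finType) (X Y U : {set T}) :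
  (forall y, y \in X -> y \in Y -> False) -> X :|: Y \subset U -> #|X| + #|Y| <= #|U|.
Proof.
move=> d s.
have d' : X :&: Y = set0.
  apply/setP => y; rewrite !inE; apply/negP => /andP [a b]; exact: d a b.
have := cardsU X Y; rewrite d' cards0 subn0 => <-.
exact: subset_leq_card.
Qed.

Lemma F1 (V : finType) (E : {set {set V}}) (k : nat) (u w : V) :
  is_graph E -> TFk E k -> w \in nb E u -> k <= dg E u -> 4 <= dg E w ->
  dg E u - 1 + #|nb E w :&: Rset E u| <= k + 1.
Proof.
move=> hE TF wu hu hw.
have huw : adj E u w by rewrite -in_nb.
have := TF u w huw hu hw; apply: leq_trans.
have -> : dg E u - 1 = #|nb E u :\ w| by rewrite /dg (cardsD1 w (nb E u)) wu; lia.
apply: card_disj_le.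
  move=> x; rewrite !inE => /andP [_ ux] /andP [_ /andP [_ /negP]].
  by apply.
apply/subsetP => x; rewrite !inE => /orP [/andP [xw ux] | /andP [wx /andP [xu nux]]].
  rewrite negb_or xw ux /= !andbT.
  by apply/negP => /eqP exu; move: ux; rewrite exu (negbTE (adj_irr u hE)).
rewrite negb_or xu wx /= orbT !andbT.
by apply/negP => /eqP exw; move: wx; rewrite exw (negbTE (adj_irr w hE)).
Qed.

Lemma F3 (V : finType) (E : {set {set V}}) (k : nat) (u w x : V) :
  is_graph E -> w \in nb E u -> x \in Rset E u -> adj E w x ->
  #|(nb E w :|: nb E x) :\: [set w; x]| <= k + 1 ->
  dg E w + #|nb E x :&: Rset E u| <= k + 1 + #|nb E w :&: Rset E u|.
Proof.
move=> hE wu xR wx hU.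
set R := Rset E u in xR *.
have xw : x \in nb E w :&: R by rewrite inE in_nb wx xR.
have c1 : #|nb E w :&: R| = 1 + #|(nb E w :&: R) :\ x| by rewrite (cardsD1 x) xw.
have c2 : #|(nb E x :&: R) :&: nb E w| <= #|(nb E w :&: R) :\ x|.
  apply: subset_leq_card; apply/subsetP => y; rewrite !inE.
  case/andP => [/andP [xy yR] wy]; rewrite wy yR andbT /= andbT.
  by apply/negP => /eqP eyx; move: xy; rewrite eyx (negbTE (adj_irr x hE)).
have c3 := cardsD (nb E x :&: R) (nb E w).
have c4 : #|nb E w :\ x| + #|(nb E x :&: R) :\: nb E w| <= k + 1.
  apply: leq_trans hU; apply: card_disj_le.
    move=> y; rewrite !inE => /andP [_ wy] /and4P [/negP nwy _ _ _]; exact: nwy.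
  apply/subsetP => y; rewrite !inE => /orP [/andP [yx wy] | /and4P [nwy xy yu nuy]].
    rewrite negb_or yx wy /= !andbT.
    by apply/negP => /eqP eyw; move: wy; rewrite eyw (negbTE (adj_irr w hE)).
  rewrite negb_or xy orbT !andbT.
  have yx : y != x by apply/negP => /eqP eyx; move: xy; rewrite eyx (negbTE (adj_irr x hE)).
  rewrite yx andbT.
  apply/negP => /eqP eyw; move: nuy; rewrite eyw -in_nb wu.
  by [].
have c5 : #|nb E w :\ x| + 1 = dg E w by rewrite /dg (cardsD1 x (nb E w)) in_nb wx; lia.
have c6 : #|(nb E x :&: R) :&: nb E w| <= #|nb E x :&: R| by apply: subset_leq_card; apply: subsetIl.
lia.
Qed.



Lemma main_setup (V : finType) (E : {set {set V}}) (k : nat) (u : V) :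
  is_graph E -> #|V| = 2 * k + 1 ->
  #|Rset E u| + dg E u = 2 * k /\
  [/\ \sum_x dg E x = dg E u + \sum_(w in nb E u) dg E w + \sum_(x in Rset E u) dg E x,
      \sum_(x in Rset E u) dg E x = \sum_(x in Rset E u) #|nb E x :&: Rset E u| + \sum_(w in nb E u) #|nb E w :&: Rset E u|,
      (forall x, x \in Rset E u -> #|nb E x :&: Rset E u| + 1 <= #|Rset E u|),
      (forall x, x \in Rset E u -> dg E x = #|nb E x :&: Rset E u| + #|nb E x :&: nb E u|) &
      (forall w, w \in nb E u -> #|nb E w :&: Rset E u| + 1 <= dg E w)].
Proof.
move=> hE hV; set R := Rset E u.
have uu : u \notin nb E u by rewrite in_nb adj_irr.
have CR : ~: R = u |: nb E u.
  apply/setP => x; rewrite /R /Rset !inE negb_and !negbK.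
  by case: (eqVneq x u) => [->|] //=; rewrite (negbTE (adj_irr u hE)).
have cCR : #|~: R| = dg E u + 1 by rewrite CR cardsU1 uu /dg addnC.
have inR x : (x \in R) = (x != u) && ~~ adj E u x by rewrite /R /Rset inE.
have dgR x : x \in R -> dg E x = #|nb E x :&: R| + #|nb E x :&: nb E u|.
  move=> xR; rewrite /dg -(cardsID R (nb E x)); congr (_ + _).
  apply: eq_card => y; rewrite !inE.
  move: xR; rewrite inR => /andP [xu nux].
  case: (eqVneq y u) => [->|yu] /=.
    by rewrite (negbTE (adj_irr u hE)) andbF adj_sym (negbTE nux).
  by rewrite negbK andbC.
split.
  have := cardsC R; rewrite cCR hV; lia.
split.
- rewrite (bigD1 u) //= -addnA; congr (_ + _).
  rewrite (bigID (fun x => adj E u x)) /=; congr (_ + _); apply: eq_bigl => x.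
    rewrite in_nb; case: (eqVneq x u) => [->|] //=.
    by rewrite (negbTE (adj_irr u hE)).
  by rewrite inR.
- idtac.
  transitivity (\sum_(x in R) (#|nb E x :&: R| + #|nb E x :&: nb E u|)).
    by apply: eq_bigr => x xR; rewrite dgR.
  rewrite big_split /=; congr (_ + _).
  rewrite (eq_bigr (fun x => \sum_(w in nb E u) (w \in nb E x : nat))); last first.
    by move=> x _; rewrite card_setI_sum.
  rewrite exchange_big /=; apply: eq_bigr => w _.
  rewrite card_setI_sum; apply: eq_bigr => x _.
  by rewrite !in_nb adj_sym.
- move=> x xR; rewrite (cardsD1 x R) xR addn1 add1n ltnS.
  apply: subset_leq_card; apply/subsetP => y; rewrite !inE.
  case: (eqVneq y x) => [->|] //=; first by rewrite (negbTE (adj_irr x hE)).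
  by move=> _ /and3P [_ -> ->].
- exact: dgR.
- move=> w wu; rewrite /dg (cardsD1 u (nb E w)) in_nb adj_sym -in_nb wu addnC leq_add2l.
  apply: subset_leq_card; apply/subsetP => y; rewrite !inE.
  case: (eqVneq y u) => [->|] /=; first by rewrite andbF.
  by move=> _ /andP [->].
Qed.


Lemma sum_le_except (T : finType) (A : {set T}) (F : T -> nat) (c d : nat) (y0 : T) :
  y0 \in A -> (forall x, x \in A -> F x <= c) -> F y0 <= d ->
  \sum_(x in A) F x + c <= #|A| * c + d.
Proof.
move=> xA hF hd.
rewrite (big_setD1 y0) //=.
have h1 : \sum_(x in A :\ y0) F x <= #|A :\ y0| * c.
  rewrite -sum_nat_const; apply: leq_sum => x; rewrite inE => /andP [_ xA']; exact: hF.
have h2 : #|A| = 1 + #|A :\ y0| by rewrite (cardsD1 y0) xA.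
rewrite h2 mulnDl mul1n.
lia.
Qed.

Lemma sum_le_const (T : finType) (A : {set T}) (F : T -> nat) (c : nat) :
  (forall x, x \in A -> F x <= c) -> \sum_(x in A) F x <= #|A| * c.
Proof. move=> h; rewrite -sum_nat_const; exact: leq_sum. Qed.

Lemma arith_big1 k D r S1 S2 :
  6 <= k -> r + D = 2 * k -> D = k + 2 -> S1 <= D * D -> S2 <= r * (r - 1) ->
  D + S1 + S2 <= 2 * k * k + 12.
Proof. move=> hk hr hD h1 h2. subst D. have er : r = k - 2 by lia. subst r. nia. Qed.

Lemma arith_big2 k D r S1 S2 :
  6 <= k -> r + D = 2 * k -> k + 3 <= D -> S1 <= D * 5 -> S2 <= r * (r - 1) ->
  D + S1 + S2 <= 2 * k * k + 12.
Proof.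
move=> hk hr hD h1 h2.
have hr2 : r <= k - 3 by lia.
have h3 : r * (r - 1) <= r * (k - 4) by apply: leq_mul => //; lia.
have h4 : r * (k - 4) <= (k - 3) * (k - 4) by apply: leq_mul => //.
nia.
Qed.

Lemma main_bound (V : finType) (E : {set {set V}}) (k : nat) :
  6 <= k -> #|V| = 2 * k + 1 -> is_graph E -> TFk E k ->
  \sum_x dg E x <= 2 * k * k + 12.
Proof.
move=> hk hV hE TF.
have : 0 < #|V| by rewrite hV addn1.
case/card_gt0P => y0 _.
have [u _ hmax] := @arg_maxnP V y0 predT (dg E) isT.
set D := dg E u.
have hmax' x : dg E x <= D by exact: hmax.
set R := Rset E u.
have [cR [S1 S2 dRb dgR oW]] := main_setup u hE hV.
rewrite -/R -/D in cR S1 S2 dRb dgR oW.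
case: (leqP D (k - 1)) => hD.
  apply: (@leq_trans (\sum_(x : V) D)); first by apply: leq_sum => x _.
  rewrite sum_nat_const hV.
  have : (2 * k + 1) * D <= (2 * k + 1) * (k - 1) by apply: leq_mul.
  move: hk; clear; nia.
have f1 w : w \in nb E u -> 4 <= dg E w -> D - 1 + #|nb E w :&: R| <= k + 1.
  move=> wu hw; apply: F1 => //; lia.
have SW : \sum_x dg E x = D + \sum_(w in nb E u) (dg E w + #|nb E w :&: R|)
                          + \sum_(x in R) #|nb E x :&: R|.
  by rewrite S1 S2 big_split /=; lia.
have SR : \sum_(x in R) #|nb E x :&: R| <= #|R| * (#|R| - 1).
  by apply: sum_le_const => x xR; have := dRb x xR; lia.
case: (leqP (k + 2) D) => hD2.
  rewrite SW.
  case: (eqVneq D (k + 2)) => eD.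
    apply: (arith_big1 hk cR eD _ SR).
    apply: sum_le_const => w wu.
    have ho := oW w wu; have hd := hmax' w.
    case: (leqP 4 (dg E w)) => h4.
      have := f1 w wu h4; move: eD hd; clear; lia.
    move: h4 ho eD hk; clear; lia.
  have hD3 : k + 3 <= D by move: hD2 eD; clear; lia.
  apply: (arith_big2 hk cR hD3 _ SR).
  apply: sum_le_const => w wu.
  have ho := oW w wu.
  case: (leqP 4 (dg E w)) => h4.
    have := f1 w wu h4; move: hD3; clear; lia.
  move: h4 ho; clear; lia.
case: (eqVneq D (k + 1)) => eD1.
  have cR1 : #|R| = k - 1 by move: cR eD1; clear; lia.
  case: (boolP [exists w, [exists x, [&& w \in nb E u, x \in R, adj E w x & dg E w == k + 1]]]).
    case/existsP => w0 /existsP [z0 /and4P [w0u z0R aw0 /eqP dw0]].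
    have ow0 : #|nb E w0 :&: R| <= 1.
      have h4w : 4 <= k + 1 by move: hk; clear; lia.
      have := f1 w0 w0u; rewrite dw0 => h; have := h h4w; move: eD1; clear; lia.
    have dz0 : #|nb E z0 :&: R| <= 2.
      case: (leqP 4 (dg E z0)) => h4.
        have hkw : k <= dg E w0 by rewrite dw0 leq_addr.
        have hU := TF _ _ aw0 hkw h4.
        have := F3 hE w0u z0R aw0 hU; rewrite -/R dw0; move: ow0; clear; lia.
      have ht : 0 < #|nb E z0 :&: nb E u|.
        apply/card_gt0P; exists w0; rewrite inE w0u andbT in_nb adj_sym; exact: aw0.
      have := dgR z0 z0R; move: h4 ht; clear; lia.
    have hs := @sum_le_except V R (fun x => #|nb E x :&: R|) (k - 2) 2 z0 z0R
                 (fun x xR => ltac:(have := dRb x xR; rewrite cR1; lia)) dz0.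
    have hw : \sum_(w in nb E u) (dg E w + #|nb E w :&: R|) <= D * (k + 2).
      apply: sum_le_const => w wu.
      have ho := oW w wu; have hd := hmax' w.
      case: (leqP 4 (dg E w)) => h4.
        have := f1 w wu h4; move: eD1 hd; clear; lia.
      move: h4 ho hk; clear; lia.
    rewrite SW; move: hs hw; rewrite cR1 eD1; move: hk; clear; nia.
  move=> hne.
  have hw : \sum_(w in nb E u) (dg E w + #|nb E w :&: R|) <= D * (k + 1).
    apply: sum_le_const => w wu.
    have ho := oW w wu; have hd := hmax' w.
    case: (eqVneq (dg E w) (k + 1)) => dw.
      case: (posnP #|nb E w :&: R|) => [->|/card_gt0P [x hx]]; first by rewrite dw addn0.
      move/negP: hne; case; apply/existsP; exists w; apply/existsP; exists x.
      move: hx; rewrite inE in_nb => /andP [-> ->]; by rewrite wu dw eqxx.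
    case: (leqP 4 (dg E w)) => h4.
      have := f1 w wu h4; move: eD1 hd dw; clear; lia.
    move: h4 ho hk; clear; lia.
  rewrite SW; move: SR hw; rewrite cR1 eD1; move: hk; clear; nia.
have eDk : D = k by move: hD hD2 eD1; clear; lia.
have cRk : #|R| = k by move: cR eDk; clear; lia.
have o2 w : w \in nb E u -> #|nb E w :&: R| <= 2.
  move=> wu; have ho := oW w wu.
  case: (leqP 4 (dg E w)) => h4.
    have := f1 w wu h4; move: eDk; clear; lia.
  move: h4 ho; clear; lia.
set m := \sum_(x in R) (dg E x == k : nat).
set Dd := \sum_(w in nb E u) (k - dg E w).
have hSR : \sum_(x in R) dg E x <= #|R| * (k - 1) + m.
  rewrite -sum_nat_const /m -big_split /=; apply: leq_sum => x _.
  have := hmax' x; rewrite eDk; case: (eqVneq (dg E x) k) => [->|ne] /=; first by lia.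
  move: ne; clear; lia.
have hSW : \sum_(w in nb E u) dg E w + Dd = D * k.
  rewrite /Dd -big_split /= -sum_nat_const; apply: eq_bigr => w _.
  by have := hmax' w; rewrite eDk => h; rewrite subnKC.
have hT : \sum_(x in R) #|nb E x :&: nb E u| = \sum_(w in nb E u) #|nb E w :&: R|.
  have : \sum_(x in R) dg E x = \sum_(x in R) #|nb E x :&: R| + \sum_(x in R) #|nb E x :&: nb E u|.
    by rewrite -big_split /=; apply: eq_bigr => x xR; rewrite dgR.
  rewrite S2; lia.
have hO : \sum_(w in nb E u) #|nb E w :&: R| <= D * 2 by apply: sum_le_const.
pose inner x := \sum_(w in nb E u) (adj E w x : nat) * (k - dg E w).
have pt x : x \in R -> (dg E x == k) * k <= (dg E x == k) * inner x + #|nb E x :&: nb E u| + 3 * (dg E x == k).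
  move=> xR; case: (eqVneq (dg E x) k) => dx /=; last by rewrite !mul0n.
  rewrite !mul1n muln1.
  have ht : 0 < #|nb E x :&: nb E u|.
    have := dgR x xR; have := dRb x xR; rewrite cRk dx; clear; lia.
  case/card_gt0P: ht => w; rewrite inE in_nb => /andP [axw wu].
  have awx : adj E w x by rewrite adj_sym.
  have hin : k - dg E w <= inner x.
    by rewrite /inner (bigD1 w) //= awx mul1n leq_addr.
  suff : dg E w <= 3 + #|nb E x :&: nb E u| by move: hin; clear; lia.
  case: (leqP 4 (dg E w)) => h4; last by move: h4; clear; lia.
  have hkx : k <= dg E x by rewrite dx.
  have hU := TF _ _ axw hkx h4.
  have eU : (nb E x :|: nb E w) :\: [set x; w] = (nb E w :|: nb E x) :\: [set w; x].
    by rewrite [nb E x :|: _]setUC [[set x; w]]setUC.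
  rewrite eU in hU.
  have := F3 hE wu xR awx hU; rewrite -/R.
  have := o2 w wu; have := dgR x xR; rewrite dx; clear; lia.
have hsum : m * k <= 2 * Dd + D * 2 + 3 * m.
  have e1 : m * k = \sum_(x in R) (dg E x == k) * k by rewrite /m big_distrl.
  rewrite e1; apply: (@leq_trans (\sum_(x in R) ((dg E x == k) * inner x + #|nb E x :&: nb E u| + 3 * (dg E x == k)))); first exact: leq_sum.
  have e2 : \sum_(x in R) ((dg E x == k) * inner x + #|nb E x :&: nb E u| + 3 * (dg E x == k)) = \sum_(x in R) (dg E x == k) * inner x + \sum_(x in R) #|nb E x :&: nb E u| + 3 * m.
    rewrite big_split; congr (_ + _); first by rewrite big_split.
    by rewrite /m big_distrr.
  rewrite e2 hT.
  have hin2 : \sum_(x in R) (dg E x == k) * inner x <= 2 * Dd.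
    rewrite /inner.
    rewrite (eq_bigr (fun x => \sum_(w in nb E u) (dg E x == k) * ((adj E w x : nat) * (k - dg E w)))); last first.
      by move=> x _; rewrite big_distrr.
    rewrite exchange_big /= /Dd big_distrr /=; apply: leq_sum => w wu.
    apply: (@leq_trans (\sum_(x in R) (adj E w x : nat) * (k - dg E w))).
      by apply: leq_sum => x _; case: (dg E x == k); rewrite ?mul1n ?mul0n.
    rewrite -big_distrl /=.
    have -> : \sum_(x in R) (adj E w x : nat) = #|nb E w :&: R|.
      by rewrite card_setI_sum; apply: eq_bigr => x _; rewrite in_nb.
    by rewrite leq_mul2r (o2 w wu) orbT.
  move: hin2 hO; clear; lia.
rewrite S1; move: hSR hSW hsum; rewrite cRk eDk; move: hk; clear.
move=> hk h1 h2 h3.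
case: (leqP m 12) => hm; first by nia.
nia.
Qed.


Lemma split_sum p t (F : nat -> nat) a b :
  t <= p -> (forall i, i < t -> F i = a) -> (forall i, t <= i -> i < p -> F i = b) ->
  \sum_(i < p) F i = t * a + (p - t) * b.
Proof.
move=> htp ha hb.
rewrite -(big_mkord xpredT F) (big_cat_nat (leq0n t) htp) /=.
rewrite (@eq_big_nat _ _ _ 0 t F (fun _ => a)); last by move=> i /andP [_ hi]; exact: ha.
rewrite (@eq_big_nat _ _ _ t p F (fun _ => b)); last by move=> i /andP [h1 h2]; exact: hb.
by rewrite !sum_nat_const_nat subn0.
Qed.

Lemma blk_count p t (bb : bool) : t <= p ->
  #|[set y : 'I_p | (y < t) == bb]| = if bb then t else p - t.
Proof.
move=> htp.
rewrite -sum_mem_card.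
rewrite (eq_bigr (fun y : 'I_p => (fun i : nat => ((i < t) == bb : nat)) y)); last first.
  by move=> y _; rewrite inE.
rewrite (@split_sum p t (fun i : nat => ((i < t) == bb : nat)) (if bb then 1 else 0) (if bb then 0 else 1) htp).
- by case: bb; lia.
- by move=> i hi; rewrite hi; case: bb.
- by move=> i hi _; rewrite ltnNge hi; case: bb.
Qed.

Definition E0 (n p : nat) : {set {set 'I_p}} :=
  [set [set x; y] | x in 'I_p, y in 'I_p & (x != y) && ((x < n - 1) == (y < n - 1))].

Lemma adjE0 n p (x y : 'I_p) : adj (E0 n p) x y = (x != y) && ((x < n - 1) == (y < n - 1)).
Proof.
apply/idP/idP.
- rewrite /adj /E0 => /imset2P [a b _]; rewrite inE => /andP [_ /andP [ab hab]] e.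
  have c : #|[set x; y]| = #|[set a; b]| by rewrite e.
  rewrite !cards2 ab in c.
  have -> : x != y by case: (x != y) c.
  have hx : x \in [set a; b] by rewrite -e set21.
  have hy : y \in [set a; b] by rewrite -e set22.
  move: hx hy; rewrite !inE => /orP [] /eqP -> /orP [] /eqP ->; rewrite ?eqxx //.
  by rewrite eq_sym.
- move=> h; rewrite /adj /E0; apply/imset2P; exists x y => //.
  by rewrite inE.
Qed.

Lemma E0_graph n p : is_graph (E0 n p).
Proof.
apply/forall_inP => e /imset2P [a b _]; rewrite inE => /andP [_ /andP [ab _]] ->.
by rewrite cards2 ab.
Qed.

Lemma dgE0 n p (x : 'I_p) : n - 1 <= p ->
  dg (E0 n p) x = (if x < n - 1 then n - 1 else p - (n - 1)) - 1.
Proof.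
move=> hp; rewrite /dg.
have -> : nb (E0 n p) x = [set y : 'I_p | (y < n - 1) == (x < n - 1)] :\ x.
  apply/setP => y; rewrite !inE adjE0 eq_sym; congr (_ && _); by rewrite eq_sym.
rewrite -(blk_count (x < n - 1) hp) (cardsD1 x [set y : 'I_p | _]) inE eqxx.
by set c := #|_ :\ x|; rewrite /nat_of_bool add1n subn1.
Qed.

Lemma cardE0 n p : 1 <= n -> n - 1 <= p -> 2 * #|E0 n p| = (n - 1) * (n - 2) + (p - (n - 1)) * (p - n).
Proof.
move=> hn hp; rewrite -handshake; last exact: E0_graph.
rewrite (eq_bigr (fun x : 'I_p => (fun i : nat => (if i < n - 1 then n - 1 else p - (n - 1)) - 1) x)); last first.
  by move=> x _; rewrite dgE0.
rewrite (@split_sum p (n - 1) (fun i : nat => (if i < n - 1 then n - 1 else p - (n - 1)) - 1) (n - 2) (p - n) hp).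
- by [].
- by move=> i -> /=; lia.
- by move=> i hi _; rewrite ltnNge hi /=; lia.
Qed.

Lemma E0_free n p : 6 <= n -> n - 1 <= p -> p - (n - 1) < n -> ~~ contains_copy (T3 n) (E0 n p).
Proof.
move=> hn hp hpn; apply/negP => /existsP [f /andP [/injectiveP finj /forall_inP hf]].
have h0 : 0 < n by lia.
have h1 : 1 < n by lia.
pose o0 : 'I_n := Ordinal h0.
pose o1 : 'I_n := Ordinal h1.
have edge (a b : 'I_n) : T3_adj a b -> ((f a : nat) < n - 1) == ((f b : nat) < n - 1).
  move=> hab.
  have he : [set a; b] \in T3 n by apply/imset2P; exists a b => //; rewrite inE.
  have := hf _ he; rewrite imsetU1 imset_set1 => hadj.
  by move: hadj; rewrite -/(adj (E0 n p) (f a) (f b)) adjE0 => /andP [_].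
have hb (i : 'I_n) : ((f i : nat) < n - 1) == ((f o0 : nat) < n - 1).
  case: (eqVneq (val i) 0) => [i0|i0].
    by have -> : i = o0 by apply: val_inj.
  case: (leqP (val i) (n - 4)) => hi.
    rewrite eq_sym; apply: edge; rewrite /T3_adj /=; apply/orP; left.
    by apply/andP; split; [rewrite lt0n | ].
  have e1 := edge o1 i.
  have e2 := edge o0 o1.
  have := ltn_ord i => hin.
  have hi' : n - 4 < nat_of_ord i := hi.
  have t1 : T3_adj o1 i.
    rewrite /T3_adj /=; apply/andP; split; move: hi' hin hn; clear; lia.
  have t2 : T3_adj o0 o1 by rewrite /T3_adj /=; move: hn; clear; lia.
  move: (e1 t1) (e2 t2) => /eqP <- /eqP ->; exact: eqxx.
have sub : f @: [set: 'I_n] \subset [set y : 'I_p | (y < n - 1) == ((f o0 : nat) < n - 1)].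
  apply/subsetP => y /imsetP [i _ ->]; rewrite inE; exact: hb.
have := subset_leq_card sub.
rewrite card_imset // cardsT card_ord blk_count //.
case: (_ < n - 1); lia.
Qed.


Theorem lemma4p5 (n : nat) (hn : 10 <= n) :
  ex (2 * n - 7) (T3 n) = n ^ 2 - 8 * n + 22.
Proof.
have en2 : n ^ 2 = n * n by rewrite expnS expn1.
apply/eqP; rewrite eqn_leq; apply/andP; split.
- apply/bigmax_leqP => E /andP [hE hT].
  have TF : TFk E (n - 4).
    move=> a b hab ha hb.
    have h6 : 6 <= n by lia.
    have := tfree_cond h6 hE hT hab ha hb; lia.
  have hV : #|'I_(2 * n - 7)| = 2 * (n - 4) + 1 by rewrite card_ord; lia.
  have h6 : 6 <= n - 4 by lia.
  have := main_bound h6 hV hE TF.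
  rewrite handshake // en2 => h.
  have e : (n - 4) * (n - 4) = n * n - 8 * n + 16 by nia.
  suff hh : 2 * #|E| <= 2 * (n * n - 8 * n + 22) by rewrite leq_pmul2l in hh.
  apply: (leq_trans h); rewrite -mulnA e; move: hn; clear; lia.
- have hE0 : is_graph (E0 n (2 * n - 7)) && ~~ contains_copy (T3 n) (E0 n (2 * n - 7)).
    rewrite E0_graph /=; apply: E0_free; lia.
  rewrite /ex; apply: (leq_trans _ (@leq_bigmax_cond _ (fun E => is_graph E && ~~ contains_copy (T3 n) E) (fun E => #|E|) (E0 n (2 * n - 7)) hE0)).
  have h1 : 1 <= n by lia.
  have h2 : n - 1 <= 2 * n - 7 by lia.
  have := cardE0 h1 h2.
  have -> : 2 * n - 7 - (n - 1) = n - 6 by lia.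
  have -> : 2 * n - 7 - n = n - 7 by lia.
  rewrite en2 => h.
  nia.
Qed.
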